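(* Let $\mathcal{C}$ be a covering of a finite set $E$. If $XH$ induced by $\mathcal{C}$ is the closure operator of a matroid on $E$, then $VH$ induced by $\mathcal{C}$ is also the closure operator of a matroid on $E$; moreover $\mathcal{I}_{XH}(\mathcal{C})=\mathcal{I}_{VH}(\mathcal{C})$ and $\mathcal{L}_{XH}(M(\mathcal{C}))=\mathcal{L}_{VH}(M(\mathcal{C}))$.
   Context: A covering of $E$ is a family of nonempty subsets of $E$ with union $E$. $N(x)=\bigcap\{K\in\mathcal{C}:x\in K\}$; $XH(X)=\{x:N(x)\cap X\neq\emptyset\}$; $VH(X)=\bigcup\{N(x):N(x)\cap X\neq\emptyset\}$. When $H\in\{XH,VH\}$ is the closure operator of a matroid (closure $cl(X)=\{a:r(X\cup\{a\})=r(X)\}$), $\mathcal{I}_H(\mathcal{C})=\{I\subseteq E:x\notin H(I-\{x\})\ \forall x\in I\}$ is its family of independent sets and $\mathcal{L}_H(M(\mathcal{C}))=\{X:H(X)=X\}$ its set of closed sets. *)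

(* Defs.v *)
From mathcomp Require Import all_boot.
Set Implicit Arguments. Unset Strict Implicit. Unset Printing Implicit Defensive.

(* The finite ground set E is the whole finite type T. *)
Section Covering.
Variable T : finType.

Definition is_covering (C : {set {set T}}) : Prop :=
  set0 \notin C /\ \bigcup_(K in C) K = [set: T].

Definition Nbd (C : {set {set T}}) (x : T) : {set T} :=
  \bigcap_(K in C | x \in K) K.

Definition XH (C : {set {set T}}) (X : {set T}) : {set T} :=
  [set x | Nbd C x :&: X != set0].

Definition VH (C : {set {set T}}) (X : {set T}) : {set T} :=
  \bigcup_(x | Nbd C x :&: X != set0) Nbd C x.

Definition is_matroid (I : {set {set T}}) : Prop :=
  [/\ set0 \in I,
      (forall A B : {set T}, B \in I -> A \subset B -> A \in I) &
      (forall A B : {set T}, A \in I -> B \in I -> #|A| < #|B| ->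
         exists2 x, x \in B :\: A & x |: A \in I)].

Definition mrank (I : {set {set T}}) (X : {set T}) : nat :=
  \max_(A in I | A \subset X) #|A|.

Definition mclosure (I : {set {set T}}) (X : {set T}) : {set T} :=
  [set a | mrank I (a |: X) == mrank I X].

Definition is_matroid_closure (H : {set T} -> {set T}) : Prop :=
  exists I, is_matroid I /\ forall X, H X = mclosure I X.

Definition indep_of (H : {set T} -> {set T}) : {set {set T}} :=
  [set I : {set T} | [forall x in I, x \notin H (I :\ x)]].

Definition closed_of (H : {set T} -> {set T}) : {set {set T}} :=
  [set X : {set T} | H X == X].

End Covering.

(* Main.v *)
Require Import Defs.
From mathcomp Require Import all_boot.

Section S.
Variable T : finType.
Implicit Types (C : {set {set T}}) (I : {set {set T}}) (A B X : {set T}).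

Lemma mrank_mono I A B : A \subset B -> mrank I A <= mrank I B.
Proof.
move=> AB; rewrite /mrank; apply/bigmax_leqP => D /andP[DI DA].
apply: (@leq_bigmax_cond _ _ _ D); by rewrite DI (subset_trans DA AB).
Qed.

Lemma mrank_card I A : mrank I A <= #|A|.
Proof.
rewrite /mrank; apply/bigmax_leqP => D /andP[_ DA]; exact: subset_leq_card.
Qed.

Lemma mrank0 I : mrank I set0 = 0.
Proof. by apply/eqP; rewrite -leqn0 -(cards0 T) mrank_card. Qed.

Lemma mexch I x y : x \notin mclosure I set0 -> x \in mclosure I [set y] ->
  y \in mclosure I [set x].
Proof.
rewrite /mclosure !inE setU0 mrank0 => /negP Hx /eqP Hxy.
have h1 : 1 <= mrank I [set x] by rewrite lt0n; apply/negP => /eqP h; apply: Hx; rewrite h.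
have hy : mrank I [set y] <= 1 by rewrite -(cards1 y) mrank_card.
have hm : mrank I [set x] <= mrank I (x |: [set y]).
  by apply: mrank_mono; rewrite subsetUl.
have e : y |: [set x] = x |: [set y] by rewrite setUC.
rewrite e Hxy; apply/eqP; apply/anti_leq/andP; split.
  by apply: leq_trans hy h1.
by rewrite -Hxy.
Qed.

Lemma mem_Nbd C x : x \in Nbd C x.
Proof. by apply/bigcapP => K /andP[_ ]. Qed.

Lemma Nbd_sub C x y : y \in Nbd C x -> Nbd C y \subset Nbd C x.
Proof.
move=> /bigcapP Hy; apply/subsetP => z /bigcapP Hz; apply/bigcapP => K /andP[KC xK].
by apply: Hz; rewrite KC Hy // KC.
Qed.

Lemma XH1 C x y : (x \in XH C [set y]) = (y \in Nbd C x).
Proof.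
rewrite /XH inE; apply/set0Pn/idP => [[z]|h].
  by rewrite !inE => /andP[h /eqP e]; rewrite -e.
by exists y; rewrite !inE h eqxx.
Qed.

Lemma XH_VH C : is_matroid_closure (XH C) -> forall X, XH C X = VH C X.
Proof.
move=> [I [_ HI]] X.
have exch : forall x y, x \in XH C [set y] -> y \in XH C [set x].
  move=> x y; rewrite !HI; apply: mexch.
  by rewrite -HI /XH inE setI0 eqxx.
apply/setP => y; apply/idP/idP.
  move=> hy; apply/bigcupP; exists y; last exact: mem_Nbd.
  by move: hy; rewrite inE.
move=> /bigcupP [x hx yx].
have := exch x y; rewrite XH1 => /(_ yx); rewrite XH1 => xy.
move: hx => /set0Pn [z]; rewrite inE => /andP[zx zX].
rewrite inE; apply/set0Pn; exists z; rewrite inE zX andbT.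
have hs := Nbd_sub C y x xy. by move/subsetP: hs; apply.
Qed.
End S.

Theorem proposition28 (T : finType) (C : {set {set T}}) :
  is_covering C ->
  is_matroid_closure (XH C) ->
  [/\ is_matroid_closure (VH C),
      indep_of (XH C) = indep_of (VH C) &
      closed_of (XH C) = closed_of (VH C)].
Proof.
move=> _ hm; have e := @XH_VH T C hm.
split.
- case: hm => I [HI1 HI2]; exists I; split => // X; by rewrite -e.
- by apply/setP => A; rewrite !inE; apply/eq_forallb => x; rewrite e.
- by apply/setP => A; rewrite !inE e.
Qed.
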